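(* Let $X_1,\dots,X_n$ be independent with $X_i\sim\mathrm{Bernoulli}(p_i)$, $\lambda=\sum_{i=1}^np_i$, and let $\alpha_1,\dots,\alpha_n$ be i.i.d., independent of the $X_i$, with $\Pr(\alpha_i=1)=\Pr(\alpha_i=2)=1/2$. Let $S_n=\sum_{i=1}^n\alpha_iX_i$. Then $$D\big(P_{S_n}\,\|\,\mathrm{Po}(\lambda/2,\lambda/2)\big)\le\sum_{i=1}^np_i^2.$$
   Context: $\mathrm{Po}(\lambda/2,\lambda/2)$ denotes the compound Poisson distribution of $Z_1+2Z_2$, where $Z_1,Z_2$ are i.i.d. Poisson with mean $\lambda/2$. $D(P\|Q)=\sum_xP(x)\log\frac{P(x)}{Q(x)}$ is relative entropy with natural logarithm. *)

(* Defs.v *)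
From mathcomp Require Import all_boot all_order all_algebra.
From mathcomp Require Import all_classical all_reals all_analysis.
Set Implicit Arguments. Unset Strict Implicit. Unset Printing Implicit Defensive.
Import Order.TTheory GRing.Theory Num.Theory.
Local Open Scope ring_scope.

Section Defs.
Variable R : realType.

Definition poisson_pmf (mu : R) (k : nat) : R :=
  expR (- mu) * mu ^+ k / (k`!)%:R.

(* Po(a, b): law of Z1 + 2 Z2 with Z1 ~ Poisson(a), Z2 ~ Poisson(b) independent:
   P(Z1 + 2 Z2 = k) = sum_{j, 2j <= k} P(Z1 = k - 2j) P(Z2 = j). *)
Definition cpo_pmf (a b : R) (k : nat) : R :=
  \sum_(j < k./2.+1) poisson_pmf a (k - 2 * j) * poisson_pmf b j.

(* Sample space for (X_1..X_n, alpha_1..alpha_n): outcome w i = (X_i = 1, alpha_i = 2). *)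
Definition outcome (n : nat) := {ffun 'I_n -> bool * bool}.

Definition joint_weight (n : nat) (p : 'I_n -> R) (w : outcome n) : R :=
  \prod_(i < n) ((if (w i).1 then p i else 1 - p i) * 2^-1).

Definition alpha_val (b : bool) : nat := if b then 2 else 1.
Definition S_val (n : nat) (w : outcome n) : nat :=
  \sum_(i < n) alpha_val (w i).2 * nat_of_bool (w i).1.

Definition law_S (n : nat) (p : 'I_n -> R) (k : nat) : R :=
  \sum_(w : outcome n | S_val w == k) joint_weight p w.

(* Relative entropy D(P||Q) = sum_x P(x) log(P(x)/Q(x)) (natural log,
   convention 0 log 0 = 0) for P supported on {0,...,N-1}. *)
Definition relEnt (N : nat) (P Q : nat -> R) : R :=
  \sum_(k < N) (if P k == 0 then 0 else P k * ln (P k / Q k)).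

End Defs.

(* Main.v *)
Require Import Defs.
From mathcomp Require Import all_boot all_order all_algebra.
From mathcomp Require Import all_classical all_reals all_analysis.
From mathcomp Require Import zify ring lra.
Import Order.TTheory GRing.Theory Num.Theory.
Local Open Scope ring_scope.
Section Aux.
Variable R : realType.

Lemma ln_le_sub1 (x : R) : 0 < x -> ln x <= x - 1.
Proof.
move=> x0; have := @le_ln1Dx R (x - 1).
have -> : 1 + (x - 1) = x by ring.
apply; lra.
Qed.

Lemma logsum (I : finType) (P : pred I) (a b c : I -> R) (Q : R) :
  (forall j, P j -> 0 <= a j) -> (forall j, P j -> 0 <= b j) ->
  (forall j, P j -> 0 < a j -> 0 < b j /\ c j = a j * ln (a j / b j)) ->
  (forall j, P j -> a j = 0 -> c j = 0) ->
  0 < \sum_(j | P j) a j -> \sum_(j | P j) b j <= Q ->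
  (\sum_(j | P j) a j) * ln ((\sum_(j | P j) a j) / Q) <= \sum_(j | P j) c j.
Proof.
move=> a0 b0 hab hc Apos BQ.
set A := \sum_(j | P j) a j in Apos BQ *.
set B := \sum_(j | P j) b j in BQ.
have B0 : 0 <= B by apply: sumr_ge0.
have Bpos : 0 < B.
  rewrite lt_neqAle B0 andbT; apply/eqP => /esym Beq.
  have := psumr_eq0P b0 Beq => bz.
  suff : A = 0 by move=> Az; move: Apos; rewrite Az ltxx.
  apply: big1 => j Pj; have := a0 j Pj; rewrite le_eqVlt => /orP[/eqP <- //|aj].
  by have [bp _] := hab j Pj aj; move: bp; rewrite bz // ltxx.
have Qpos : 0 < Q by apply: lt_le_trans BQ.
have key : forall j, P j -> a j * ln (A / Q) + a j - b j * A / Q <= c j.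
  move=> j Pj; have := a0 j Pj; rewrite le_eqVlt => /orP[/eqP aj|aj].
    rewrite (hc j Pj (esym aj)) -aj mul0r add0r sub0r oppr_le0.
    by rewrite divr_ge0 ?mulr_ge0 ?b0 ?ltW.
  have [bp ->] := hab j Pj aj.
  set y := b j * A / (a j * Q).
  have ypos : 0 < y by rewrite /y; apply: divr_gt0; apply: mulr_gt0.
  have e : A / Q = (a j / b j) * y by rewrite /y; field; rewrite ?gt_eqF //; lra.
  have lnAQ : ln (A / Q) = ln (a j / b j) + ln y.
    by rewrite e lnM // posrE divr_gt0.
  have hy := @ln_le_sub1 y ypos.
  have ay : a j * y = b j * A / Q by rewrite /y; field; rewrite ?gt_eqF //; lra.
  rewrite lnAQ mulrDr.
  have : a j * ln y <= a j * (y - 1) by rewrite ler_pM2l.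
  rewrite mulrBr mulr1 ay; lra.
apply: le_trans (ler_sum _ key).
rewrite big_split /= big_split /= -!mulr_suml -/A -/B sumrN.
have : B * A / Q <= A.
  by rewrite ler_pdivrMr // mulrC ler_pM2l.
rewrite -!mulr_suml -/B; lra.
Qed.

End Aux.

Definition Tt (R : realType) (a : R) (k j : nat) : R :=
  if (2 * j <= k)%N then a ^+ (k - j) / ((k - 2 * j)`!%:R * (j`!)%:R) else 0.
Arguments Tt {R}.
Section S.
Variable R : realType.
Lemma Tt_main (a : R) d j : Tt a (d + 2 * j) j = a ^+ (d + j) / (d`!%:R * (j`!)%:R).
Proof.
rewrite /Tt ifT; last lia.
have -> : (d + 2 * j - j = d + j)%N by lia.
by have -> : (d + 2 * j - 2 * j = d)%N by lia.
Qed.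

Lemma Tt_A (a : R) d j : (if (d + 2 * j < 1)%N then 0 else Tt a (d + 2 * j - 1) j)
   = d%:R * a ^+ (d + j).-1 / (d`!%:R * (j`!)%:R).
Proof.
case: d => [|d].
  rewrite mul0r mul0r; case: ifP => // h; rewrite /Tt ifF //; apply/negbTE; move/negbT: h; lia.
have -> : (d.+1 + 2 * j < 1)%N = false by apply/negbTE; lia.
have -> : (d.+1 + 2 * j - 1 = d + 2 * j)%N by lia.
rewrite Tt_main factS natrM.
have -> : (d.+1 + j).-1 = (d + j)%N by lia.
have f1 : (d`!%:R : R) != 0 by rewrite pnatr_eq0 -lt0n fact_gt0.
have f2 : (j`!%:R : R) != 0 by rewrite pnatr_eq0 -lt0n fact_gt0.
field; by rewrite f1 f2 /= addrC natr1 pnatr_eq0.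
Qed.

Lemma Tt_B (a : R) d j : (if (d + 2 * j < 2)%N then 0 else
      (if j == 0%N then 0 else Tt a (d + 2 * j - 2) j.-1))
   = j%:R * a ^+ (d + j).-1 / (d`!%:R * (j`!)%:R).
Proof.
case: j => [|j].
  by rewrite mul0r mul0r; case: ifP.
rewrite ifF; last by apply/negbTE; lia.
have -> : (d + 2 * j.+1 - 2 = d + 2 * j)%N by lia.
rewrite /= Tt_main factS natrM.
have -> : (d + j.+1).-1 = (d + j)%N by lia.
have f1 : (d`!%:R : R) != 0 by rewrite pnatr_eq0 -lt0n fact_gt0.
have f2 : (j`!%:R : R) != 0 by rewrite pnatr_eq0 -lt0n fact_gt0.
field; by rewrite f1 f2 /= addrC natr1 pnatr_eq0.
Qed.
End S.
Section S2.
Variable R : realType.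
Lemma bern (a q : R) m : 0 <= a -> 0 <= q ->
  a ^+ m + q * m%:R * a ^+ m.-1 <= (a + q) ^+ m.
Proof.
move=> a0 q0; elim: m => [|m IH]; first by rewrite !expr0 mulr0 mul0r addr0.
rewrite exprS [X in _ <= X]exprS /=.
case: m IH => [|m] IH.
  by rewrite !expr0 !mulr1.
rewrite /= in IH *.
have h1 : (a + q) * (a ^+ m.+1 + q * m.+1%:R * a ^+ m) <= (a + q) * (a + q) ^+ m.+1.
  by rewrite ler_wpM2l // addr_ge0.
apply: le_trans h1.
rewrite exprS.
have hm : 0 <= a ^+ m by apply: exprn_ge0.
have hn : 0 <= (m.+1)%:R :> R by [].
rewrite -[(m.+2)%:R]natr1 -[(m.+1)%:R]natr1 in hn *.
set M := (m%:R : R) in hn *.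
have hM : 0 <= M by rewrite /M.
set X := a ^+ m in hm *.
have := mulr_ge0 (mulr_ge0 (mulr_ge0 q0 q0) hn) hm; nra.
Qed.

Lemma TL (a q : R) k j : 0 <= a -> 0 <= q ->
  Tt a k j + q * (if (k < 1)%N then 0 else Tt a (k - 1) j)
   + q * (if (k < 2)%N then 0 else (if j == 0%N then 0 else Tt a (k - 2) j.-1))
  <= Tt (a + q) k j.
Proof.
move=> a0 q0; case: (leqP (2 * j) k) => h.
  have [d ->] : exists d, k = (d + 2 * j)%N by exists (k - 2 * j)%N; lia.
  rewrite Tt_A Tt_B !Tt_main.
  have F0 : 0 < ((d`!)%:R * (j`!)%:R : R) by rewrite mulr_gt0 // ltr0n fact_gt0.
  have -> : a ^+ (d + j) / (d`!%:R * j`!%:R) +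
     q * (d%:R * a ^+ (d + j).-1 / (d`!%:R * j`!%:R)) +
     q * (j%:R * a ^+ (d + j).-1 / (d`!%:R * j`!%:R)) =
     (a ^+ (d + j) + q * (d + j)%:R * a ^+ (d + j).-1) / (d`!%:R * j`!%:R).
    by rewrite natrD; ring.
  by rewrite ler_pM2r ?invr_gt0 // bern.
rewrite /Tt; (repeat case: ifPn => ?); first [ by exfalso; lia | by rewrite ?mulr0 ?addr0 ].
Qed.
End S2.
Section S3.
Variable R : realType.
Definition Fh (a : R) (k : nat) : R := \sum_(j < k.+1) Tt a k j.
Lemma Fh_ext N a k : (k < N)%N -> \sum_(j < N) Tt a k j = Fh a k.
Proof.
move=> kN; rewrite /Fh (big_ord_widen N (Tt a k) kN) [RHS]big_mkcond /=.
apply: eq_bigr => j _; case: ifP => // hj.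
rewrite /Tt ifF //; apply/negbTE; lia.
Qed.

Lemma Tt_ge0 (a : R) k j : 0 <= a -> 0 <= Tt a k j.
Proof. by move=> a0; rewrite /Tt; case: ifP => // _; rewrite divr_ge0 ?exprn_ge0. Qed.

Lemma Lsum (a q : R) k : 0 <= a -> 0 <= q ->
  Fh a k + q * (if k == 0%N then 0 else Fh a k.-1)
   + q * (if (k < 2)%N then 0 else Fh a (k - 2)) <= Fh (a + q) k.
Proof.
move=> a0 q0.
have eA : (if k == 0%N then 0 else Fh a k.-1) =
    \sum_(j < k.+1) (if (k < 1)%N then 0 else Tt a (k - 1) j).
  case: k => [|k] /=; first by rewrite big1.
  by rewrite subn1 /= Fh_ext.
have eB : (if (k < 2)%N then 0 else Fh a (k - 2)) =
    \sum_(j < k.+1) (if (k < 2)%N then 0 else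
        (if (nat_of_ord j) == 0%N then 0 else Tt a (k - 2) j.-1)).
  case: ifP => hk; first by rewrite big1.
  rewrite big_ord_recl /= add0r -(@Fh_ext k); last lia.
  by apply: eq_bigr => j _; rewrite add0n.
rewrite eA eB /Fh !mulr_sumr -!big_split /=.
by apply: ler_sum => j _; apply: TL.
Qed.

Definition Tp (q : R) : {poly R} := 1 + q%:P * 'X + q%:P * 'X^2.

Lemma coef_Tp (P : {poly R}) q k : (P * Tp q)`_k =
  P`_k + q * (if k == 0%N then 0 else P`_k.-1)
   + q * (if (k < 2)%N then 0 else P`_(k - 2)).
Proof.
rewrite /Tp !mulrDr mulr1 !coefD mulrCA coefCM coefMX mulrCA coefCM coefMXn.
by [].
Qed.

Lemma prodTp (I : Type) (r : seq I) (q : I -> R) :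
  (forall i, 0 <= q i) -> forall k,
  (\prod_(i <- r) Tp (q i))`_k <= Fh (\sum_(i <- r) q i) k.
Proof.
move=> q0; elim: r => [|x r IH] k.
  rewrite !big_nil coef1; case: k => [|k].
    by rewrite /Fh big_ord1 /Tt /= expr0 mul1r mulr1 invr1.
  by rewrite /= sumr_ge0 // => j _; apply: Tt_ge0.
rewrite !big_cons mulrC coef_Tp [q x + _]addrC.
have s0 : 0 <= \sum_(i <- r) q i by apply: sumr_ge0.
apply: le_trans (Lsum _ _ k s0 (q0 x)).
apply: lerD; first apply: lerD => //.
  by apply: ler_wpM2l => //; case: ifP.
by apply: ler_wpM2l => //; case: ifP.
Qed.


Lemma cpo_Fh (a : R) k : cpo_pmf a a k = expR (- (a + a)) * Fh a k.
Proof.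
rewrite /cpo_pmf /Fh mulr_sumr.
rewrite (big_ord_widen k.+1 (fun j => Defs.poisson_pmf a (k - 2 * j)%N * Defs.poisson_pmf a j)); last first.
  by rewrite ltnS leq_half_double -mul2n; lia.
rewrite [LHS]big_mkcond /=; apply: eq_bigr => j _.
rewrite /Tt ltnS geq_half_double -mul2n.
case: ifP => h; last by rewrite mulr0.
rewrite /Defs.poisson_pmf opprD expRD.
have -> : (k - j = (k - 2 * j) + j)%N by lia.
rewrite exprD; field.
by rewrite !pnatr_eq0 -!lt0n !fact_gt0.
Qed.

Variables (n : nat) (p : 'I_n -> R).
Hypothesis hp : forall i, 0 <= p i <= 1.

Definition bb i (x : bool * bool) : R := (if x.1 then p i else 1) * 2^-1.
Definition sv (x : bool * bool) : nat := (alpha_val x.2 * nat_of_bool x.1)%N.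

Lemma Tp_sum i : \sum_(x : bool * bool) (bb i x)%:P * 'X^(sv x) = Tp (p i * 2^-1).
Proof.
rewrite -(pair_bigA _ (fun b1 b2 => (bb i (b1, b2))%:P * 'X^(sv (b1, b2)))) /=.
rewrite !big_bool /= /bb /sv /= /Tp expr0 !mulr1 expr1 mul1r.
have h2 : (2^-1 : R) + 2^-1 = 1 by field.
rewrite muln1 -polyCD h2 polyC1.
ring.
Qed.

Lemma prodX (I : finType) (s : I -> nat) :
  \prod_i ('X^(s i) : {poly R}) = 'X^(\sum_i s i).
Proof. by rewrite (big_morph (fun m => 'X^m : {poly R}) (fun x y => exprD _ x y) (expr0 _)). Qed.

Lemma expand k : \sum_(w : outcome n | S_val w == k) \prod_i bb i (w i)
   = (\prod_i Tp (p i * 2^-1))`_k.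
Proof.
under eq_bigr do rewrite -Tp_sum.
rewrite bigA_distr_bigA /= coef_sum big_mkcond /=.
apply: eq_bigr => w _.
rewrite [in RHS]big_split /= -rmorph_prod prodX coefCM coefXn /S_val eq_sym.
by case: eqP => _; rewrite ?mulr1 ?mulr0.
Qed.

Definition aa i (x : bool * bool) : R := (if x.1 then p i else 1 - p i) * 2^-1.
Definition bq i (x : bool * bool) : R := expR (- p i) * bb i x.
Definition gg i x : R := if aa i x == 0 then 0 else ln (aa i x / bq i x).

Lemma aa_ge0 i x : 0 <= aa i x.
Proof. have := hp i; rewrite /aa; case: ifP => _ /andP[h1 h2]; rewrite mulr_ge0 //; lra. Qed.
Lemma bq_ge0 i x : 0 <= bq i x.
Proof. have := hp i; rewrite /bq /bb; case: ifP => _ /andP[h1 h2]; rewrite !mulr_ge0 ?expR_ge0 //; lra. Qed.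
Lemma aa_pos i x : 0 < aa i x -> 0 < bq i x.
Proof.
have := hp i; rewrite /aa /bq /bb; case: ifP => _ /andP[h1 h2] h.
  rewrite mulr_gt0 ?expR_gt0 //; nra.
rewrite mulr_gt0 ?expR_gt0 //; lra.
Qed.

Lemma Bbound k : \sum_(w : outcome n | S_val w == k) \prod_i bq i (w i)
   <= cpo_pmf ((\sum_i p i) / 2) ((\sum_i p i) / 2) k.
Proof.
under eq_bigr do rewrite big_split /= -expR_sum sumrN.
rewrite -mulr_sumr expand cpo_Fh.
have -> : (\sum_i p i) / 2 + (\sum_i p i) / 2 = \sum_i p i by field.
apply: ler_wpM2l; first exact: expR_ge0.
rewrite mulr_suml; apply: prodTp => i.
have := hp i => /andP[h1 _]; rewrite mulr_ge0 //; lra.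
Qed.

Lemma ln_prod (I : finType) (f : I -> R) : (forall i, 0 < f i) ->
  ln (\prod_i f i) = \sum_i ln (f i).
Proof.
move=> fpos.
suff [] : 0 < \prod_i f i /\ ln (\prod_i f i) = \sum_i ln (f i) by [].
apply: (big_ind2 (fun x y => 0 < x /\ ln x = y)).
- by rewrite ln1.
- move=> x1 x2 y1 y2 [h1 <-] [h2 <-]; split; first exact: mulr_gt0.
  by rewrite lnM // posrE.
- by move=> i _; split.
Qed.

Lemma perk k :
  (if law_S p k == 0 then 0 else law_S p k * ln (law_S p k / cpo_pmf ((\sum_i p i) / 2) ((\sum_i p i) / 2) k))
  <= \sum_(w : outcome n | S_val w == k) ((\prod_i aa i (w i)) * \sum_i gg i (w i)).
Proof.
have -> : law_S p k = \sum_(w : outcome n | S_val w == k) \prod_i aa i (w i) by [].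
have a0 : forall w : outcome n, S_val w == k -> 0 <= \prod_i aa i (w i).
  by move=> w _; apply: prodr_ge0 => i _; apply: aa_ge0.
case: ifP => [/eqP h0|hn0].
  rewrite big1 // => w hw.
  by rewrite (psumr_eq0P a0 h0) // mul0r.
apply: (@logsum _ _ _ _ (fun w : outcome n => \prod_i bq i (w i))).
- exact: a0.
- by move=> w _; apply: prodr_ge0 => i _; apply: bq_ge0.
- move=> w _ hw.
  have hi : forall i, 0 < aa i (w i).
    move=> i; rewrite lt_neqAle aa_ge0 andbT eq_sym.
    move/lt0r_neq0: hw => /prodf_neq0 hw; exact: hw.
  have hb : forall i, 0 < bq i (w i) by move=> i; apply: aa_pos.
  split; first by apply: prodr_gt0 => i _.
  congr (_ * _).
  rewrite -prodfV -big_split /= ln_prod; last first.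
    by move=> i; rewrite divr_gt0.
  by apply: eq_bigr => i _; rewrite /gg gt_eqF.
- by move=> w _ ->; rewrite mul0r.
- by rewrite lt_neqAle eq_sym hn0 sumr_ge0.
- exact: Bbound.
Qed.

Lemma aa_sum i : \sum_x aa i x = 1.
Proof.
rewrite -(pair_bigA _ (fun b1 b2 => aa i (b1, b2))) /= !big_bool /aa /=; lra.
Qed.

Lemma marg i : \sum_(w : outcome n) (\prod_j aa j (w j)) * gg i (w i)
   = \sum_x aa i x * gg i x.
Proof.
pose F := fun j x => if j == i then aa j x * gg j x else aa j x.
transitivity (\sum_(w : outcome n) \prod_j F j (w j)).
  apply: eq_bigr => w _.
  rewrite (bigD1 i) // [RHS](bigD1 i) //= /F eqxx.
  rewrite [in RHS](eq_bigr (fun j => aa j (w j))); last by move=> j /negbTE ->.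
  by rewrite mulrAC.
rewrite -bigA_distr_bigA (bigD1 i) //= /F eqxx [X in _ * X]big1 ?mulr1 // => j /negbTE ->.
exact: aa_sum.
Qed.

Lemma coord i : \sum_x aa i x * gg i x <= p i ^+ 2.
Proof.
have [h0 h1] : 0 <= p i /\ p i <= 1 by apply/andP.
have key : forall x, aa i x * gg i x <= if x.1 then p i * p i / 2 else 0.
  move=> [[] b]; rewrite /gg /bq /bb /aa /=.
    case: eqP => h; first by rewrite mulr0 divr_ge0 ?mulr_ge0.
    have pn0 : p i != 0 by apply/eqP => hh; apply: h; rewrite hh; ring.
    have -> : p i * 2^-1 / (expR (- p i) * (p i * 2^-1)) = expR (p i).
      by rewrite expRN; field; rewrite pn0 /= gt_eqF ?expR_gt0.
    by rewrite expRK mulrAC.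
  case: eqP => h; first by rewrite mulr0.
  apply: mulr_ge0_le0; first by rewrite mulr_ge0 //; lra.
  apply: (@ln_le0 R).
  have e := expR_ge1Dx (- p i).
  have epos := expR_gt0 (- p i).
  rewrite ler_pdivrMr; last by rewrite mulr_gt0 //.
  lra.
apply: le_trans (ler_sum _ (fun x _ => key x)) _.
rewrite -(pair_bigA _ (fun b1 b2 => if (b1, b2).1 then p i * p i / 2 else 0)) /=.
rewrite !big_bool /= expr2; lra.
Qed.

Lemma Sval_lt (w : outcome n) : (S_val w < (2 * n).+1)%N.
Proof.
rewrite ltnS /S_val.
have h : forall i, (alpha_val (w i).2 * (w i).1 <= 2)%N by move=> i; case: (w i) => [[] []].
apply: leq_trans (leq_sum _ (fun i _ => h i)) _.
by rewrite big_const_ord iter_addn_0.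
Qed.

End S3.

Theorem mainTheorem14 (R : realType) (n : nat) (p : 'I_n -> R)
  (hp : forall i, 0 <= p i <= 1) :
  let lambda := \sum_(i < n) p i in
  relEnt (2 * n).+1 (law_S p) (cpo_pmf (lambda / 2) (lambda / 2))
    <= \sum_(i < n) p i ^+ 2.
Proof.
cbv zeta; rewrite /relEnt.
apply: le_trans; first by apply: ler_sum => k _; apply: perk.
under eq_bigr do rewrite big_mkcond.
rewrite exchange_big /=.
under eq_bigr => w _.
  rewrite -big_mkcond /= (big_pred1 (Ordinal (@Sval_lt n w))); last first.
    by move=> k; rewrite /= eq_sym; apply/eqP/eqP => [h|->//]; apply: val_inj.
  over.
under eq_bigr do rewrite mulr_sumr.
rewrite exchange_big /=.
apply: ler_sum => i _.
rewrite marg; exact: coord.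
Qed.
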